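(* Let $\bar x\in\Phi$ be a local second-order weak sharp minimizer of problem (P) with corresponding constants $\kappa>0$ and $\delta>0$. Then for every $x\in S\cap B_\delta(\bar x)$, every $d\in C(x)$, and every $\lambda\in\mathbb{R}^m$ with $\nabla_xL(x,\lambda)=0$, one has (i) $\sigma_{\nabla g(x)(T''_\Phi(x;d))}(\lambda)\le0$; (ii) $\nabla^2_{xx}L(x,\lambda)(d,d)-\sigma_{\nabla g(x)(T^2_\Phi(x;d))+\nabla^2g(x)(d,d)}(\lambda)\ge 2\kappa\,[\mathrm{dist}(d,T_S(x))]^2$.
   Context: Standing setting: $f:\mathbb{R}^n\to\mathbb{R}$ and $g:\mathbb{R}^n\to\mathbb{R}^m$ are twice continuously differentiable, $K\subset\mathbb{R}^m$ is closed, and (P) is the problem $\min f(x)$ s.t. $g(x)\in K$. $\Phi:=\{x: g(x)\in K\}$ and $S$ is the (nonempty) set of optimal solutions of (P). $L(x,\lambda):=f(x)+\langle g(x),\lambda\rangle$. $\bar x\in\Phi$ is a local second-order weak sharp minimizer with constants $\kappa,\delta>0$ if $f(x)\ge f(\bar x)+\kappa[\mathrm{dist}(x,S)]^2$ for all $x\in\Phi\cap B_\delta(\bar x)$. For a closed set $A$ and $\bar x\in A$: $T_A(\bar x):=\{d:\exists t_k\downarrow0,d_k\to d,\ \bar x+t_kd_k\in A\}$; for $d\in T_A(\bar x)$, $T^2_A(\bar x;d):=\{w:\exists t_k\downarrow0,w_k\to w,\ \bar x+t_kd+\tfrac12t_k^2w_k\in A\}$ and $T''_A(\bar x;d):=\{w:\exists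 (t_k,r_k)\downarrow(0,0),\ t_k/r_k\to0,\ w_k\to w,\ \bar x+t_kd+\tfrac12t_kr_kw_k\in A\}$. $C(x):=\{d:\nabla g(x)d\in T_K(g(x)),\ \nabla f(x)d\le0\}$. $\sigma_A(\lambda):=\sup_{u\in A}\langle\lambda,u\rangle$ ($-\infty$ if $A=\emptyset$). $\nabla^2g(x)(d,d):=(d^T\nabla^2g_i(x)d)_{i=1}^m$, $\nabla g(x)(A):=\{\nabla g(x)u:u\in A\}$. *)

(* Defs.v *)
From HB Require Import structures.
From mathcomp Require Import all_boot all_order all_algebra.
From mathcomp Require Import all_classical all_reals all_analysis.
Set Implicit Arguments. Unset Strict Implicit. Unset Printing Implicit Defensive.
Import Order.TTheory GRing.Theory Num.Theory.
Import numFieldNormedType.Exports.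
Local Open Scope classical_set_scope.
Local Open Scope ring_scope.

Section Defs.
Variable R : realType.

Definition dotv {n : nat} (u v : 'rV[R]_n) : R := \sum_(i < n) u ord0 i * v ord0 i.
Definition enorm {n : nat} (u : 'rV[R]_n) : R := Num.sqrt (dotv u u).

Definition eucl_dist {n : nat} (x : 'rV[R]_n) (A : set 'rV[R]_n) : R :=
  inf [set enorm (x - a) | a in A].

Definition D2 {n : nat} {V : normedModType R} (h : 'rV[R]_n -> V)
  (x v w : 'rV[R]_n) : V := 'd (fun z => 'd h z v) x w.

Definition C2 {n : nat} {V : normedModType R} (h : 'rV[R]_n -> V) : Prop :=
  (forall x, differentiable h x) /\
  (forall v x, differentiable (fun z => 'd h z v) x) /\
  (forall v w, continuous (fun z => D2 h z v w)).

Definition tcone {n : nat} (A : set 'rV[R]_n) (x : 'rV[R]_n) : set 'rV[R]_n :=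
  [set d | exists (t : nat -> R) (dk : nat -> 'rV[R]_n),
     (forall k, 0 < t k) /\ t @ \oo --> (0 : R) /\ dk @ \oo --> d /\
     (forall k, A (x + t k *: dk k))].

Definition tset2 {n : nat} (A : set 'rV[R]_n) (x d : 'rV[R]_n) : set 'rV[R]_n :=
  [set w | exists (t : nat -> R) (wk : nat -> 'rV[R]_n),
     (forall k, 0 < t k) /\ t @ \oo --> (0 : R) /\ wk @ \oo --> w /\
     (forall k, A (x + t k *: d + (2^-1 * t k ^+ 2) *: wk k))].

Definition tsetpp {n : nat} (A : set 'rV[R]_n) (x d : 'rV[R]_n) : set 'rV[R]_n :=
  [set w | exists (t r : nat -> R) (wk : nat -> 'rV[R]_n),
     (forall k, 0 < t k) /\ (forall k, 0 < r k) /\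
     t @ \oo --> (0 : R) /\ r @ \oo --> (0 : R) /\
     (fun k => t k / r k) @ \oo --> (0 : R) /\ wk @ \oo --> w /\
     (forall k, A (x + t k *: d + (2^-1 * t k * r k) *: wk k))].

(* support function sigma_A(lambda), extended-real valued (-oo on the empty set) *)
Definition suppf {m : nat} (A : set 'rV[R]_m) (lam : 'rV[R]_m) : \bar R :=
  ereal_sup [set (dotv u lam)%:E | u in A].

Definition feas {n m : nat} (g : 'rV[R]_n -> 'rV[R]_m) (K : set 'rV[R]_m) :
  set 'rV[R]_n := [set x | K (g x)].

Definition solset {n m : nat} (f : 'rV[R]_n -> R) (g : 'rV[R]_n -> 'rV[R]_m)
  (K : set 'rV[R]_m) : set 'rV[R]_n :=
  [set x | feas g K x /\ forall y, feas g K y -> f x <= f y].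

Definition Lag {n m : nat} (f : 'rV[R]_n -> R) (g : 'rV[R]_n -> 'rV[R]_m)
  (lam : 'rV[R]_m) (x : 'rV[R]_n) : R := f x + dotv (g x) lam.

Definition critcone {n m : nat} (f : 'rV[R]_n -> R) (g : 'rV[R]_n -> 'rV[R]_m)
  (K : set 'rV[R]_m) (x : 'rV[R]_n) : set 'rV[R]_n :=
  [set d | tcone K (g x) ('d g x d) /\ 'd f x d <= 0].

Definition so_weak_sharp {n m : nat} (f : 'rV[R]_n -> R) (g : 'rV[R]_n -> 'rV[R]_m)
  (K : set 'rV[R]_m) (xbar : 'rV[R]_n) (kappa delta : R) : Prop :=
  feas g K xbar /\
  forall x, feas g K x -> enorm (x - xbar) < delta ->
    f xbar + kappa * eucl_dist x (solset f g K) ^+ 2 <= f x.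

End Defs.

(* Main.v *)
Require Import Defs.
From HB Require Import structures.
From mathcomp Require Import all_boot all_order all_algebra.
From mathcomp Require Import all_classical all_reals all_analysis.
From mathcomp Require Import ring lra.
Import Order.TTheory GRing.Theory Num.Theory.
Import numFieldNormedType.Exports.
Local Open Scope classical_set_scope.
Local Open Scope ring_scope.

Section Basics.
Context {R : realType}.
Local Set Implicit Arguments. Local Unset Strict Implicit.

Lemma dotvDl n (a b c : 'rV[R]_n) : dotv (a + b) c = dotv a c + dotv b c.
Proof. by rewrite /dotv -big_split; apply: eq_bigr => i _; rewrite mxE mulrDl. Qed.

Lemma dotv_ge0 n (u : 'rV[R]_n) : 0 <= dotv u u.
Proof. by rewrite /dotv; apply: sumr_ge0 => i _; rewrite -expr2 sqr_ge0. Qed.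

Lemma enorm_ge0 n (u : 'rV[R]_n) : 0 <= enorm u.
Proof. exact: sqrtr_ge0. Qed.

Lemma coord_le_enorm n (u : 'rV[R]_n) i : `|u 0 i| <= enorm u.
Proof.
rewrite /enorm -sqrtr_sqr ler_sqrt ?dotv_ge0 // /dotv (bigD1 i) //= expr2.
by rewrite lerDl; apply: sumr_ge0 => j _; rewrite -expr2 sqr_ge0.
Qed.

Lemma norm_le_enorm n (u : 'rV[R]_n) : `|u| <= enorm u.
Proof.
change (mx_norm u <= enorm u); rewrite mx_normrE; apply: bigmax_le; first exact: enorm_ge0.
by move=> [i j] _ /=; rewrite (ord1 i); apply: coord_le_enorm.
Qed.

Lemma enormZ n (c : R) (u : 'rV[R]_n) : enorm (c *: u) = `|c| * enorm u.
Proof.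
rewrite /enorm /dotv.
have -> : \sum_(i < n) (c *: u) 0 i * (c *: u) 0 i = c ^+ 2 * \sum_(i < n) u 0 i * u 0 i.
  by rewrite mulr_sumr; apply: eq_bigr => i _; rewrite !mxE; ring.
by rewrite sqrtrM ?sqr_ge0 // sqrtr_sqr.
Qed.

Lemma enormN n (u : 'rV[R]_n) : enorm (- u) = enorm u.
Proof. by rewrite -scaleN1r enormZ normrN normr1 mul1r. Qed.

Lemma cvg_fsum {T : Type} {F : set_system T} {FF : Filter F} (I : Type) (r : seq I)
  (G : I -> T -> R) (l : I -> R) :
  (forall i, G i x @[x --> F] --> l i) ->
  (\sum_(i <- r) G i x) @[x --> F] --> \sum_(i <- r) l i.
Proof.
move=> H; elim: r => [|a r IH].
  rewrite big_nil; under eq_fun do rewrite big_nil; exact: cvg_cst.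
rewrite big_cons; under eq_fun do rewrite big_cons; exact: cvgD.
Qed.

Lemma cvg_coord {T : Type} {F : set_system T} {FF : Filter F} n (a : T -> 'rV[R]_n) (b : 'rV[R]_n) i :
  a x @[x --> F] --> b -> a x 0 i @[x --> F] --> b 0 i.
Proof. by move=> H; apply: (continuous_cvg _ (@coord_continuous _ _ _ 0 i _)). Qed.

Lemma cvg_enorm {T : Type} {F : set_system T} {FF : Filter F} n (a : T -> 'rV[R]_n) (b : 'rV[R]_n) :
  a x @[x --> F] --> b -> enorm (a x) @[x --> F] --> enorm b.
Proof.
move=> H; rewrite /enorm; apply: (continuous_cvg _ (@sqrt_continuous _ _)).
rewrite /dotv; apply: cvg_fsum => i; apply: cvgM; exact: cvg_coord.
Qed.

End Basics.

Section Dist.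
Context {R : realType}.
Local Set Implicit Arguments. Local Unset Strict Implicit.

Lemma dist_ge0 n (x : 'rV[R]_n) A : A !=set0 -> 0 <= eucl_dist x A.
Proof.
move=> [a Aa]; apply: lb_le_inf; first by exists (enorm (x - a)), a.
by move=> _ [b _ <-]; apply: enorm_ge0.
Qed.

Lemma dist_le n (x : 'rV[R]_n) A a : A a -> eucl_dist x A <= enorm (x - a).
Proof.
move=> Aa; apply: ge_inf; last by exists a.
by exists 0 => _ [b _ <-]; apply: enorm_ge0.
Qed.

Lemma dist_lt n (x : 'rV[R]_n) A r : A !=set0 -> eucl_dist x A < r ->
  exists2 a, A a & enorm (x - a) < r.
Proof.
move=> [a Aa] /inf_lt [|_ [b Ab <-] lt]; first by exists (enorm (x - a)), a.
by exists b.
Qed.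

End Dist.

Section Diffs.
Context {R : realType}.
Local Set Implicit Arguments. Local Unset Strict Implicit.

Lemma diff_fsum n (I : Type) (r : seq I) (F : I -> 'rV[R]_n -> R) x :
  (forall i, differentiable (F i) x) ->
  differentiable (fun z => \sum_(i <- r) F i z) x /\
  forall w, 'd (fun z => \sum_(i <- r) F i z) x w = \sum_(i <- r) 'd (F i) x w.
Proof.
move=> H; elim: r => [|a r [IH1 IH2]].
  have -> : (fun z => \sum_(i <- [::]) F i z) = cst 0.
    by apply: funext => z; rewrite big_nil.
  split; first exact: differentiable_cst.
  by move=> w; rewrite big_nil; exact: (congr1 (fun h => h w) (diff_cst _ x)).
have -> : (fun z => \sum_(i <- a :: r) F i z) = F a + (fun z => \sum_(i <- r) F i z).
  by apply: funext => z; rewrite big_cons.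
split; first exact: (differentiableD (H a) IH1).
by move=> w; rewrite big_cons -IH2; exact: (congr1 (fun h => h w) (diffD (H a) IH1)).
Qed.

Lemma diff_scal n (k : R) (F : 'rV[R]_n -> R) x :
  differentiable F x ->
  differentiable (fun z => k * F z) x /\ forall w, 'd (fun z => k * F z) x w = k * 'd F x w.
Proof.
move=> H; have -> : (fun z => k * F z) = k *: F by [].
by split; [exact: differentiableZ | move=> w; exact: (congr1 (fun h => h w) (diffZ k H))].
Qed.

Lemma diff_coord n m (G : 'rV[R]_n -> 'rV[R]_m) x i :
  differentiable G x ->
  differentiable (fun z => G z 0 i) x /\ forall w, 'd (fun z => G z 0 i) x w = 'd G x w 0 i.
Proof.
move=> H.
have @f : {linear 'M[R]_(1, m) -> R}.
  by exists (fun N : 'M[R]_(_, _) => N 0 i); do 2![eexists]; do ?[constructor];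
     rewrite ?mxE// => ? *; rewrite ?mxE//; move=> ?; rewrite !mxE.
have fc : continuous f by apply: (@coord_continuous _ _ _ 0 i).
have -> : (fun z => G z 0 i) = f \o G by [].
have df : differentiable f (G x) by exact: linear_differentiable.
split; first exact: differentiable_comp.
move=> w; have E1 := congr1 (fun h => h w) (diff_comp H df); rewrite /= in E1.
by rewrite E1; have E2 := congr1 (fun h => h ('d G x w)) (diff_lin (G x) fc).
Qed.

Lemma diff_dotv n m (G : 'rV[R]_n -> 'rV[R]_m) (lam : 'rV[R]_m) x :
  differentiable G x ->
  differentiable (fun z => dotv (G z) lam) x /\
  forall w, 'd (fun z => dotv (G z) lam) x w = dotv ('d G x w) lam.
Proof.
move=> H.
have Hi : forall i : 'I_m, differentiable (fun z => lam 0 i * G z 0 i) x /\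
   forall w, 'd (fun z => lam 0 i * G z 0 i) x w = lam 0 i * 'd G x w 0 i.
  move=> i; have [d1 d2] := diff_coord i H; have [e1 e2] := diff_scal (lam 0 i) d1.
  by split => // w; exact: (eq_trans (e2 w) (congr1 (fun t => lam 0 i * t) (d2 w))).
have -> : (fun z => dotv (G z) lam) = (fun z => \sum_(i <- index_enum 'I_m) (fun i z => lam 0 i * G z 0 i) i z).
  by apply: funext => z; rewrite /dotv; apply: eq_bigr => i _; rewrite mulrC.
have [s1 s2] := diff_fsum (index_enum 'I_m) (fun i => (Hi i).1) .
split => // w; apply: eq_trans (s2 w) _; rewrite /dotv; apply: eq_bigr => i _.
by rewrite mulrC; apply: (Hi i).2.
Qed.

Lemma diff_Lag n m (f : 'rV[R]_n -> R) (g : 'rV[R]_n -> 'rV[R]_m) lam x :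
  differentiable f x -> differentiable g x ->
  differentiable (Lag f g lam) x /\
  forall w, 'd (Lag f g lam) x w = 'd f x w + dotv ('d g x w) lam.
Proof.
move=> df dg; have [h1 h2] := diff_dotv lam dg.
have -> : Lag f g lam = f + (fun z => dotv (g z) lam) by [].
split; first exact: (differentiableD df h1).
move=> w; rewrite -h2; exact: (congr1 (fun h => h w) (diffD df h1)).
Qed.

Lemma diff_basis n (L : {linear 'rV[R]_n -> R}) (v : 'rV[R]_n) :
  L v = \sum_(j < n) v 0 j * L 'e_j.
Proof.
by rewrite {1}(row_sum_delta v) linear_sum; apply: eq_bigr => j _; rewrite linearZ.
Qed.

Lemma D2_basis n (f : 'rV[R]_n -> R) x (u w : 'rV[R]_n) :
  (forall z, differentiable f z) ->
  (forall j : 'I_n, differentiable (fun z => 'd f z 'e_j) x) ->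
  D2 f x u w = \sum_(j < n) u 0 j * D2 f x 'e_j w.
Proof.
move=> df dj; rewrite /D2.
have -> : (fun z => 'd f z u) = (fun z => \sum_(j <- index_enum 'I_n) (fun j z => u 0 j * 'd f z 'e_j) j z).
  by apply: funext => z; exact: (diff_basis ('d f z) u).
have Hi : forall j : 'I_n, differentiable (fun z => u 0 j * 'd f z 'e_j) x
  by move=> j; exact: (diff_scal _ (dj j)).1.
apply: eq_trans ((diff_fsum _ Hi).2 w) _.
by apply: eq_bigr => j _; exact: ((diff_scal (u 0 j) (dj j)).2 w).
Qed.

Lemma D2_Lag n m (f : 'rV[R]_n -> R) (g : 'rV[R]_n -> 'rV[R]_m) lam x d :
  (forall z, differentiable f z) -> (forall z, differentiable g z) ->
  differentiable (fun z => 'd f z d) x -> differentiable (fun z => 'd g z d) x ->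
  D2 (Lag f g lam) x d d = D2 f x d d + dotv (D2 g x d d) lam.
Proof.
move=> df dg d1 d2; rewrite /D2.
have -> : (fun z => 'd (Lag f g lam) z d) = (fun z => 'd f z d) + (fun z => dotv ('d g z d) lam).
  by apply: funext => z; exact: ((diff_Lag lam (df z) (dg z)).2 d).
have [h1 h2] := diff_dotv lam d2.
apply: eq_trans (congr1 (fun h => h d) (diffD d1 h1)) _.
exact: (congr1 (fun t => 'd (fun z => 'd f z d) x d + t) (h2 d)).
Qed.

End Diffs.

Section Had.
Context {R : realType}.
Local Set Implicit Arguments. Local Unset Strict Implicit.

Lemma cvg_scal0 n (s : nat -> R) (a : nat -> 'rV[R]_n) M :
  s k @[k --> \oo] --> 0 -> (forall k, `|a k| <= M) ->
  (s k *: a k) @[k --> \oo] --> (0 : 'rV[R]_n).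
Proof.
move=> s0 aM.
have M0 : 0 <= M by apply: le_trans (aM 0%N); exact: normr_ge0.
move/cvgr0Pnorm_le: s0 => s0.
apply/cvgr0Pnorm_le => e e0.
have e'0 : 0 < e / (M + 1) by rewrite divr_gt0 // ltr_wpDl.
move: (s0 _ e'0); apply: filterS => k sk.
rewrite normrZ; apply: le_trans (ler_wpM2l (normr_ge0 _) (aM k)) _.
move: sk; rewrite ler_pdivlMr ?ltr_wpDl // => sk.
have := normr_ge0 (s k); nra.
Qed.

Lemma hadamard n (phi : 'rV[R]_n -> R) x (s : nat -> R) (a : nat -> 'rV[R]_n) M :
  differentiable phi x -> s k @[k --> \oo] --> 0 -> (forall k, s k != 0) ->
  (forall k, `|a k| <= M) ->
  ((phi (x + s k *: a k) - phi x) / s k - 'd phi x (a k)) @[k --> \oo] --> 0.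
Proof.
move=> dphi s0 sn0 aM.
have M0 : 0 <= M by apply: le_trans (aM 0%N); exact: normr_ge0.
have /eqaddoP H := diff_locally dphi.
have sa0 := cvg_scal0 s0 aM.
apply/cvgr0Pnorm_le => e e0.
have e'0 : 0 < e / (M + 1) by rewrite divr_gt0 // ltr_wpDl.
have Hn := H _ e'0.
have Hk := sa0 _ Hn.
near=> k.
have /= : `|(phi \o shift x - (cst (phi x) + 'd phi x)) (s k *: a k)| <=
       e / (M + 1) * `|s k *: a k| by near: k; exact: Hk.
move=> Hk2; have Hk3 : `|phi (s k *: a k + x) - (phi x + 'd phi x (s k *: a k))| <= e / (M + 1) * `|s k *: a k| by exact: Hk2.
move: Hk3; rewrite [s k *: a k + x]addrC linearZ /=.
set N := phi (x + s k *: a k).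
set D := 'd phi x (a k).
have sk0 : 0 < `|s k| by rewrite normr_gt0.
have -> : (N - phi x) / s k - D = (N - (phi x + s k *: D)) / s k.
  by rewrite /GRing.scale /=; field.
rewrite normrM normfV ler_pdivrMr // normrZ => Hk4.
apply: le_trans Hk4 _.
have aMk := aM k; have := normr_ge0 (a k).
have eM : e / (M + 1) * (M + 1) = e by rewrite divfK // gt_eqF // ltr_wpDl.
move: (e / (M + 1)) (e'0) eM => e' e'0' eM a0.
move: (`|s k|) (`|a k|) sk0 a0 aMk => S A S0 A0 AM.
have h1 : e' * S * A <= e' * S * M by rewrite ler_wpM2l // mulr_ge0 // ltW.
rewrite mulrA; apply: le_trans h1 _.
rewrite -eM; nra.
Unshelve. all: by end_near.
Qed.

End Had.

Section MVT2.
Context {R : realType}.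
Local Set Implicit Arguments. Local Unset Strict Implicit.

Lemma is_derive_line n (f : 'rV[R]_n -> R) (x h : 'rV[R]_n) (s : R) :
  (forall z, differentiable f z) ->
  is_derive s (1 : R) (fun r : R => f (x + r *: h)) ('d f (x + s *: h) h).
Proof.
move=> df.
have dg : is_diff s (cst x + ( *:%R ^~ h)) (0 + ( *:%R ^~ h)) := is_diffD (is_diff_cst x s) (is_diff_scalel s h).
have -> : (fun r : R => f (x + r *: h)) = f \o (cst x + ( *:%R ^~ h)) by [].
have dphi : differentiable (f \o (cst x + ( *:%R ^~ h))) s.
  by apply: differentiable_comp => //; apply: ex_diff.
split; first exact: diff_derivable.
rewrite (deriveE _ dphi).
have E := congr1 (fun q => q 1) (diff_comp (ex_diff) (df ((cst x + ( *:%R ^~ h)) s))).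
rewrite /= in E; rewrite E.
have E2 := congr1 (fun q => q 1) (@diff_val _ _ _ _ _ _ _ dg).
rewrite /= in E2; rewrite E2 add0r scale1r.
done.
Qed.

Lemma mvt_step n (f : 'rV[R]_n -> R) (x h : 'rV[R]_n) (a b : R) :
  (forall z, differentiable f z) ->
  exists2 c, 0 < c < 1 &
    f (x + h) - f x - a - b / 2 = 'd f (x + c *: h) h - a - c * b.
Proof.
move=> df.
pose p : R -> R := (id * cst a) + (cst (b / 2)) * (id ^+ 2).
pose psi : R -> R := (fun r : R => f (x + r *: h)) - p.
have dp : forall s : R, is_derive s (1 : R) p (a + s * b).
  move=> s.
  have H := is_deriveD (is_deriveM (is_derive_id s (1:R)) (is_derive_cst a s (1:R)))
    (is_deriveM (is_derive_cst (b / 2) s (1:R)) (is_deriveX 2 (is_derive_id s (1:R)))).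
  apply: (is_derive_eq H).
  by rewrite /= /cst /GRing.scale /=; field.
have dpsi : forall s : R, is_derive s (1 : R) psi ('d f (x + s *: h) h - (a + s * b)).
  move=> s; have := is_derive_line x h s df; have := dp s.
  by move=> H1 H2; apply: is_deriveB.
have [c c01 E] := @MVT R psi (fun s => 'd f (x + s *: h) h - (a + s * b)) 0 1 ltr01 (fun s _ => dpsi s)
   (derivable_within_continuous (fun s _ => @ex_derive _ _ _ _ _ _ _ (dpsi s))).
exists c; first by move: c01; rewrite in_itv /=.
have E' : f (x + 1 *: h) - (1 * a + b / 2 * (1 * 1)) - (f (x + 0 *: h) - (0 * a + b / 2 * (0 * 0)))
   = ('d f (x + c *: h) h - (a + c * b)) * (1 - 0) by exact: E.
move: E'; rewrite scale1r scale0r addr0 => E'.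
lra.
Qed.

End MVT2.

Section Taylor.
Context {R : realType}.
Local Set Implicit Arguments. Local Unset Strict Implicit.

Lemma seq_bound n (u : nat -> 'rV[R]_n) (d : 'rV[R]_n) : u k @[k --> \oo] --> d ->
  exists M, forall k, `|u k| <= M.
Proof.
move=> H; have := cvg_seq_bounded (cvgP _ H); move/ex_bound => [|M HM].
  exact: (@globally_properfilter _ _ 0%N).
by exists M => k; exact: HM.
Qed.

Lemma cvg_bmul0 (c r : nat -> R) : (forall k, `|c k| <= 1) ->
  r k @[k --> \oo] --> 0 -> (c k * r k) @[k --> \oo] --> 0.
Proof.
move=> c1 /cvgr0Pnorm_le r0; apply/cvgr0Pnorm_le => e e0.
move: (r0 _ e0); apply: filterS => k rk.
rewrite normrM; apply: le_trans rk; rewrite -[leRHS]mul1r.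
by apply: ler_wpM2r => //; exact: normr_ge0.
Qed.

Lemma alg1 (a P P0 L L' c t : R) : t != 0 -> L = c * L' ->
  a * ((P - P0) / t - L) = a * P / t - a * P0 / t - c * (a * L').
Proof. by move=> t0 ->; field. Qed.

Lemma alg2 (FF fx t D0 Q Dy c r Sy Sx SE : R) : t != 0 ->
  FF - fx - t * D0 - t ^+ 2 * Q / 2 = Dy - t * D0 - c * (t ^+ 2 * Q) ->
  Dy = t * Sy -> D0 = Sx -> SE = Sy / t - Sx / t - c * r ->
  (FF - fx - t * D0) / t ^+ 2 = 2^-1 * Q + (SE + c * (r - Q)).
Proof.
move=> t0 E DyE D0E ->; rewrite DyE D0E in E; rewrite D0E.
have -> : FF = fx + t * Sx + t ^+ 2 * Q / 2 + (t * Sy - t * Sx - c * (t ^+ 2 * Q)).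
  by rewrite -E; ring.
by field.
Qed.

Lemma sum3 n (F G H : 'I_n -> R) (t c : R) :
  \sum_(j < n) (F j / t - G j / t - c * H j) =
  (\sum_(j < n) F j) / t - (\sum_(j < n) G j) / t - c * (\sum_(j < n) H j).
Proof. by rewrite !sumrB -!mulr_suml -mulr_sumr. Qed.

Lemma taylor2 n (f : 'rV[R]_n -> R) (x : 'rV[R]_n) (t : nat -> R) (u : nat -> 'rV[R]_n) (d : 'rV[R]_n) :
  (forall z, differentiable f z) ->
  (forall v, differentiable (fun z => 'd f z v) x) ->
  (forall k, 0 < t k) -> t k @[k --> \oo] --> 0 -> u k @[k --> \oo] --> d ->
  ((f (x + t k *: u k) - f x - t k * 'd f x (u k)) / (t k ^+ 2)) @[k --> \oo] --> 2^-1 * D2 f x d d.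
Proof.
move=> df d2f t0 tc uc.
set Q := D2 f x d d.
have [B uB] := seq_bound uc.
have Hc : forall k, exists c, 0 < c < 1 /\
   f (x + t k *: u k) - f x - t k * 'd f x (u k) - (t k ^+ 2 * Q) / 2 =
   'd f (x + c *: (t k *: u k)) (t k *: u k) - t k * 'd f x (u k) - c * (t k ^+ 2 * Q).
  move=> k; have [c c01 E] := mvt_step x (t k *: u k) (t k * 'd f x (u k)) (t k ^+ 2 * Q) df.
  by exists c.
have [c Hc'] := choice Hc.
pose phi (j : 'I_n) := fun z => 'd f z 'e_j.
pose e (j : 'I_n) k := (phi j (x + t k *: (c k *: u k)) - phi j x) / t k - 'd (phi j) x (c k *: u k).
pose r k := \sum_(j < n) u k 0 j * 'd (phi j) x (u k).
have key : forall k, (f (x + t k *: u k) - f x - t k * 'd f x (u k)) / (t k ^+ 2)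
   = 2^-1 * Q + (\sum_(j < n) u k 0 j * e j k + c k * (r k - Q)).
  move=> k; have [_ E] := Hc' k.
  have tk0 : t k != 0 by rewrite gt_eqF.
  set y := x + t k *: (c k *: u k).
  have Ey : x + c k *: (t k *: u k) = y by rewrite /y !scalerA mulrC.
  rewrite Ey in E.
  have DyE : 'd f y (t k *: u k) = t k * \sum_(j < n) u k 0 j * 'd f y 'e_j.
    apply: eq_trans (linearZZ ('d f y) (t k) (u k)) _.
    exact: (congr1 (fun z => t k * z) (diff_basis ('d f y) (u k))).
  apply: (alg2 tk0 E DyE (diff_basis ('d f x) (u k))).
  apply: eq_trans (sum3 (fun j => u k 0 j * 'd f y 'e_j) (fun j => u k 0 j * 'd f x 'e_j)
     (fun j => u k 0 j * 'd (phi j) x (u k)) (t k) (c k)).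
  apply: eq_bigr => j _; rewrite /e.
  apply: (alg1 _ _ _ tk0); exact: linearZZ.
have -> : (fun k => (f (x + t k *: u k) - f x - t k * 'd f x (u k)) / (t k ^+ 2)) =
   (fun k => 2^-1 * Q + (\sum_(j < n) u k 0 j * e j k + c k * (r k - Q))).
  by apply: funext => k; exact: key.
rewrite -[X in _ --> X]addr0.
apply: cvgD; first exact: cvg_cst.
rewrite -[X in _ --> X]addr0; apply: cvgD.
- have E0 : \sum_(j < n) d 0 j * (0:R) = 0 by rewrite big1 // => j _; rewrite mulr0.
  rewrite -[X in _ --> X]E0.
  apply: (@cvg_fsum _ _ _ _ _ (index_enum 'I_n) (fun j k => u k 0 j * e j k)) => j.
  apply: cvgM; first exact: cvg_coord.
  apply: (hadamard (a := fun k => c k *: u k) (M := B) (d2f 'e_j) tc).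
    by move=> k; rewrite gt_eqF.
  move=> k; rewrite normrZ; apply: le_trans (uB k); rewrite -[leRHS]mul1r.
  apply: ler_wpM2r; first exact: normr_ge0.
  by have [/andP [c0 c1] _] := Hc' k; rewrite ger0_norm ?ltW.
- apply: cvg_bmul0.
    by move=> k; have [/andP [c0 c1] _] := Hc' k; rewrite ger0_norm ?ltW.
  rewrite -(subrr Q); apply: cvgB; last exact: cvg_cst.
  have -> : Q = \sum_(j < n) d 0 j * 'd (phi j) x d.
    by rewrite /Q (D2_basis d d df (fun j => d2f 'e_j)).
  apply: (@cvg_fsum _ _ _ _ _ (index_enum 'I_n) (fun j k => u k 0 j * 'd (phi j) x (u k))) => j.
  apply: cvgM; first exact: cvg_coord.
  apply: continuous_cvg; last exact: uc.
  by have := diff_continuous (d2f 'e_j); apply.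
Qed.

End Taylor.

Section Cluster.
Context {R : realType}.
Local Set Implicit Arguments. Local Unset Strict Implicit.

Lemma subseq_cvg {T : topologicalType} (a : nat -> T) (l : T) (kk : nat -> nat) :
  a k @[k --> \oo] --> l -> (forall j, (j <= kk j)%N) -> a (kk j) @[j --> \oo] --> l.
Proof.
move=> al kj; apply: (cvg_comp _ _ _ al).
apply/cvgnyPge => A; exists A => // j /= Aj; exact: leq_trans Aj (kj j).
Qed.

Lemma seq_cluster n (v : nat -> 'rV[R]_n) M : (forall k, `|v k| <= M) ->
  exists p : 'rV[R]_n, exists kk : nat -> nat,
    (forall j, (j <= kk j)%N) /\ v (kk j) @[j --> \oo] --> p.
Proof.
move=> vM.
have M0 : 0 <= M by apply: le_trans (vM 0%N); exact: normr_ge0.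
have M1 : 0 < M + 1 by rewrite ltr_wpDl.
pose A := closed_ball (0 : 'rV[R]_n) (M + 1).
have Acl : closed A by exact: closed_ball_closed.
have inA : forall y : 'rV[R]_n, A y <-> `|y| <= M + 1.
  by move=> y; rewrite /A closed_ballE // /closed_ball_ /= sub0r normrN.
have Ab : bounded_set A.
  rewrite /= /bounded_near; near=> M' => y /inA Hy.
  apply: le_trans Hy _; near: M'; apply: nbhs_pinfty_ge; exact: num_real.
have Acp := bounded_closed_compact Ab Acl.
have [p [Ap clp]] : A `&` cluster (v @ \oo) !=set0.
  apply: Acp.
  by exists 0%N => // k _ /=; apply/inA; apply: le_trans (vM k) _; rewrite lerDl.
exists p.
have H : forall j : nat, exists k, (j <= k)%N /\ `|p - v k| < (j.+1%:R)^-1.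
  move=> j.
  have jp : 0 < (j.+1%:R : R)^-1 by rewrite invr_gt0 ltr0n.
  have [q [[k jk <-] bq]] := clp [set v k | k in [set k | (j <= k)%N]] (ball p (j.+1%:R)^-1)
     (ex_intro2 _ _ j I (fun k jk => ex_intro2 _ _ k jk erefl)) (nbhsx_ballx _ _ jp).
  by exists k; split => //; move: bq; rewrite -ball_normE.
have [kk Hkk] := choice H.
exists kk; split; first by move=> j; case: (Hkk j).
apply/cvgrPdist_lt => e e0.
have /cvgr0Pnorm_lt h := @cvg_harmonic R.
move: (h e e0); apply: filterS => j hj.
case: (Hkk j) => _ hk; apply: lt_trans hk _.
by move: hj; rewrite /= ger0_norm // invr_ge0 ler0n.
Unshelve. all: by end_near.
Qed.

Lemma cluster_tcone n (S : set 'rV[R]_n) x (t : nat -> R) (v : nat -> 'rV[R]_n) M :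
  (forall k, 0 < t k) -> t k @[k --> \oo] --> 0 -> (forall k, S (x + t k *: v k)) ->
  (forall k, `|v k| <= M) ->
  exists p, exists kk : nat -> nat,
    [/\ (forall j, (j <= kk j)%N), v (kk j) @[j --> \oo] --> p & tcone S x p].
Proof.
move=> t0 tc Sv vM; have [p [kk [kj vp]]] := seq_cluster vM.
exists p, kk; split => //.
exists (fun j => t (kk j)), (fun j => v (kk j)); split => //.
by split => //; exact: subseq_cvg.
Qed.

End Cluster.

Section Part1.
Context {R : realType}.
Local Set Implicit Arguments. Local Unset Strict Implicit.

Lemma alg3 (t r D W F fx Dk : R) : 0 < t -> 0 < r -> D <= 0 -> fx <= F ->
  Dk = D + 2^-1 * r * W ->
  0 <= W + 2 * (t / r) * ((F - fx - t * Dk) / t ^+ 2).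
Proof.
move=> t0 r0 D0 fF ->.
have -> : W + 2 * (t / r) * ((F - fx - t * (D + 2^-1 * r * W)) / t ^+ 2)
   = 2 * (F - fx) / (t * r) + 2 * (- D) / r.
  by field; rewrite ?gt_eqF.
by apply: addr_ge0; apply: divr_ge0; nra.
Qed.

Lemma lim_ge (a : nat -> R) (c l : R) : (\forall k \near \oo, c <= a k) ->
  a k @[k --> \oo] --> l -> c <= l.
Proof. by move=> H al; apply: (closed_cvg _ (@closed_ge R c) H _ al). Qed.

Lemma lim_le (a : nat -> R) (c l : R) : (\forall k \near \oo, a k <= c) ->
  a k @[k --> \oo] --> l -> l <= c.
Proof. by move=> H al; apply: (closed_cvg _ (@closed_le R c) H _ al). Qed.

Lemma part1 n (f : 'rV[R]_n -> R) (Phi : set 'rV[R]_n) x d w :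
  (forall z, differentiable f z) -> (forall v, differentiable (fun z => 'd f z v) x) ->
  (forall y, Phi y -> f x <= f y) -> 'd f x d <= 0 -> tsetpp Phi x d w -> 0 <= 'd f x w.
Proof.
move=> df d2f fmin dd [t [r [wk [t0 [r0 [tc [rc [trc [wc Hw]]]]]]]]].
pose u k := d + (2^-1 * r k) *: wk k.
have ux : forall k, x + t k *: u k = x + t k *: d + (2^-1 * t k * r k) *: wk k.
  by move=> k; rewrite /u scalerDr addrA scalerA mulrCA mulrA.
have [B wB] := seq_bound wc.
have uc : u k @[k --> \oo] --> d.
  rewrite -[X in _ --> X]addr0; apply: cvgD; first exact: cvg_cst.
  apply: (cvg_scal0 (M:=B)) => //.
  have := cvgM (cvg_cst (2^-1 : R)) rc; rewrite mulr0; apply.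
have q := taylor2 df d2f t0 tc uc.
have ineq : forall k, 0 <= 'd f x (wk k) + 2 * (t k / r k) *
    ((f (x + t k *: u k) - f x - t k * 'd f x (u k)) / t k ^+ 2).
  move=> k.
  have fk : f x <= f (x + t k *: u k) by rewrite ux; apply: fmin; exact: Hw.
  have du : 'd f x (u k) = 'd f x d + 2^-1 * r k * 'd f x (wk k).
    apply: eq_trans (linearD ('d f x) d ((2^-1 * r k) *: wk k)) _.
    congr (_ + _); exact: linearZZ.
  exact: (alg3 (t0 k) (r0 k) dd fk du).
have lim : ('d f x (wk k) + 2 * (t k / r k) *
    ((f (x + t k *: u k) - f x - t k * 'd f x (u k)) / t k ^+ 2)) @[k --> \oo]
    --> 'd f x w + 2 * 0 * (2^-1 * D2 f x d d).
  apply: cvgD.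
    apply: continuous_cvg; last exact: wc.
    by have := diff_continuous (df x); apply.
  apply: cvgM => //; apply: cvgM => //; exact: cvg_cst.
rewrite mulr0 mul0r addr0 in lim.
by apply: lim_ge lim; apply: nearW.
Qed.

End Part1.

Section Part2.
Context {R : realType}.
Local Set Implicit Arguments. Local Unset Strict Implicit.

Lemma ev_lt (a : nat -> R) (l c : R) : a k @[k --> \oo] --> l -> l < c ->
  \forall k \near \oo, a k < c.
Proof.
move=> al lc.
have := @cvgr_dist_lt _ _ _ _ _ a l al (c - l); rewrite subr_gt0 => /(_ _ lc).
apply: filterS => k; rewrite distrC => h; have := ler_norm (a k - l); lra.
Qed.

Lemma alg4 (ka D t Dd W F fx Dk : R) : 0 < t -> Dd <= 0 -> fx + ka * D ^+ 2 <= F ->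
  Dk = Dd + 2^-1 * t * W ->
  ka * (D / t) ^+ 2 <= 2^-1 * W + (F - fx - t * Dk) / t ^+ 2.
Proof.
move=> t0 Dd0 fF ->.
have -> : 2^-1 * W + (F - fx - t * (Dd + 2^-1 * t * W)) / t ^+ 2 = (F - fx - t * Dd) / t ^+ 2.
  by field; rewrite gt_eqF.
have -> : ka * (D / t) ^+ 2 = (ka * D ^+ 2) / t ^+ 2 by field; rewrite gt_eqF.
apply: ler_wpM2r; first by rewrite invr_ge0 sqr_ge0.
nra.
Qed.

Lemma tcone_ne n (S : set 'rV[R]_n) x : S x -> tcone S x 0.
Proof.
move=> Sx; exists harmonic, (fun _ => 0); split; first by move=> k; rewrite /= invr_gt0 ltr0n.
split; first exact: cvg_harmonic.
split; first exact: cvg_cst.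
by move=> k; rewrite scaler0 addr0.
Qed.

Lemma part2 n (f : 'rV[R]_n -> R) (Phi S : set 'rV[R]_n) x xbar (delta kappa : R) d w :
  (forall z, differentiable f z) -> (forall v, differentiable (fun z => 'd f z v) x) ->
  0 < kappa -> S x ->
  (forall y, Phi y -> enorm (y - xbar) < delta -> f x + kappa * eucl_dist y S ^+ 2 <= f y) ->
  enorm (x - xbar) < delta -> 'd f x d <= 0 -> tset2 Phi x d w ->
  2 * kappa * eucl_dist d (tcone S x) ^+ 2 <= 'd f x w + D2 f x d d.
Proof.
move=> df d2f k0 Sx Hs xd dd [t [wk [t0 [tc [wc Hw]]]]].
pose u k := d + (2^-1 * t k) *: wk k.
have ux : forall k, x + t k *: u k = x + t k *: d + (2^-1 * t k ^+ 2) *: wk k.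
  by move=> k; rewrite /u scalerDr addrA scalerA mulrCA -expr2.
have [Bw wB] := seq_bound wc.
have uc : u k @[k --> \oo] --> d.
  rewrite -[X in _ --> X]addr0; apply: cvgD; first exact: cvg_cst.
  apply: (cvg_scal0 (M:=Bw)) => //.
  have := cvgM (cvg_cst (2^-1 : R)) tc; rewrite mulr0; apply.
have [B uB] := seq_bound uc.
have q := taylor2 df d2f t0 tc uc.
set Q := D2 f x d d.
pose m k := 2^-1 * 'd f x (wk k) + (f (x + t k *: u k) - f x - t k * 'd f x (u k)) / t k ^+ 2.
set l := 2^-1 * 'd f x w + 2^-1 * Q.
have mc : m k @[k --> \oo] --> l.
  apply: cvgD => //; apply: cvgM; first exact: cvg_cst.
  apply: continuous_cvg; last exact: wc.
  by have := diff_continuous (df x); apply.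
pose D k := eucl_dist (x + t k *: u k) S.
have xkc : (x + t k *: u k - xbar) @[k --> \oo] --> x - xbar.
  apply: cvgB; last exact: cvg_cst.
  rewrite -[X in _ --> X]addr0; apply: cvgD; first exact: cvg_cst.
  exact: (cvg_scal0 (M:=B)).
have evd : \forall k \near \oo, enorm (x + t k *: u k - xbar) < delta.
  exact: ev_lt (cvg_enorm xkc) xd.
have evm : \forall k \near \oo, kappa * (D k / t k) ^+ 2 <= m k.
  move: evd; apply: filterS => k xkd.
  have Phk : Phi (x + t k *: u k) by rewrite ux; exact: Hw.
  have fk := Hs _ Phk xkd.
  have du : 'd f x (u k) = 'd f x d + 2^-1 * t k * 'd f x (wk k).
    apply: eq_trans (linearD ('d f x) d ((2^-1 * t k) *: wk k)) _.
    congr (_ + _); exact: linearZZ.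
  exact: (alg4 (t0 k) dd fk du).
have Sne : S !=set0 by exists x.
have l0 : 0 <= l.
  apply: lim_ge mc; move: evm; apply: filterS => k h; apply: le_trans h.
  by apply: mulr_ge0; [exact: ltW | exact: sqr_ge0].
set d0 := eucl_dist d (tcone S x).
have d00 : 0 <= d0 by apply: dist_ge0; exists 0; exact: tcone_ne.
suff : kappa * d0 ^+ 2 <= l by rewrite /l; lra.
case: (lerP (kappa * d0 ^+ 2) l) => // Hlt; exfalso.
set rho := Num.sqrt ((l / kappa + d0 ^+ 2) / 2).
have lk0 : 0 <= l / kappa by rewrite divr_ge0 // ltW.
have rho2 : rho ^+ 2 = (l / kappa + d0 ^+ 2) / 2.
  by rewrite sqr_sqrtr // divr_ge0 // addr_ge0 // sqr_ge0.
have rho0 : 0 <= rho by exact: sqrtr_ge0.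
have lkd : l / kappa < d0 ^+ 2 by rewrite ltr_pdivrMr // mulrC.
have lrho : l < kappa * rho ^+ 2.
  rewrite rho2.
  have -> : kappa * ((l / kappa + d0 ^+ 2) / 2) = (l + kappa * d0 ^+ 2) / 2.
    by field; rewrite gt_eqF.
  lra.
have rhod : rho < d0.
  rewrite ltNge; apply/negP => h.
  have : d0 ^+ 2 <= rho ^+ 2 by rewrite ler_sqr // ?nnegrE.
  rewrite rho2; lra.
have evD : \forall k \near \oo, D k < rho * t k.
  move: (ev_lt mc lrho) evm; apply: filterS2 => k h1 h2.
  have h3 : (D k / t k) ^+ 2 < rho ^+ 2.
    by rewrite -(ltr_pM2l k0); apply: le_lt_trans h2 h1.
  have Dk0 : 0 <= D k by exact: dist_ge0.
  have : D k / t k < rho.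
    by move: h3; rewrite ltr_sqr // nnegrE divr_ge0 // ltW.
  by rewrite ltr_pdivrMr.
have [N _ HN] := evD.
have Hs2 : forall k, exists s, S s /\ enorm (x + t (k + N)%N *: u (k + N)%N - s) < rho * t (k + N)%N.
  move=> k; have [s Ss hs] := dist_lt Sne (HN (k + N)%N (leq_addl _ _)).
  by exists s.
have [s Hs3] := choice Hs2.
pose v k := (t (k + N)%N)^-1 *: (s k - x).
have tn0 : forall k, t (k + N)%N != 0 by move=> k; rewrite gt_eqF.
have xv : forall k, x + t (k + N)%N *: v k = s k.
  by move=> k; rewrite /v scalerA mulfV // scale1r addrC subrK.
have uv : forall k, enorm (u (k + N)%N - v k) < rho.
  move=> k; have [_ h] := Hs3 k.
  move: h; rewrite -{1}(xv k) opprD addrACA subrr add0r -scalerBr.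
  by rewrite enormZ gtr0_norm // mulrC ltr_pM2r.
have vB : forall k, `|v k| <= B + rho.
  move=> k; have -> : v k = u (k + N)%N - (u (k + N)%N - v k) by rewrite opprB addrC subrK.
  apply: le_trans (ler_normB _ _) _; apply: lerD; first exact: uB.
  exact: le_trans (norm_le_enorm _) (ltW (uv k)).
have t'c : t (k + N)%N @[k --> \oo] --> 0 by apply: subseq_cvg tc _ => k; exact: leq_addr.
have [p [kk [kj vp tp]]] := cluster_tcone (S := S) (x := x) (fun k => t0 (k + N)%N) t'c
   (fun k => eq_ind _ S (Hs3 k).1 _ (esym (xv k))) vB.
have uc' : u (kk j + N)%N @[j --> \oo] --> d.
  apply: subseq_cvg uc _ => j; exact: leq_trans (kj j) (leq_addr _ _).
have en : enorm (u (kk j + N)%N - v (kk j)) @[j --> \oo] --> enorm (d - p).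
  by apply: cvg_enorm; apply: cvgB; [exact: uc' | exact: vp].
have : enorm (d - p) <= rho.
  by apply: (lim_le _ en); apply: nearW => j; exact: ltW (uv (kk j)).
have := dist_le d tp; rewrite -/d0; lra.
Qed.

End Part2.

Lemma alg5 {R : realType} (a dg dfw d2f d2l c : R) : d2l = d2f + dg -> dfw = - a ->
  c <= dfw + d2f -> a + dg <= d2l - c.
Proof. move=> -> -> h; lra. Qed.

Lemma alg6 {R : realType} (a s c : R) : s <= a - c -> c <= a - s.
Proof. move=> h; lra. Qed.

Theorem theorem3p3 (R : realType) (n m : nat)
  (f : 'rV[R]_n -> R) (g : 'rV[R]_n -> 'rV[R]_m) (K : set 'rV[R]_m)
  (xbar : 'rV[R]_n) (kappa delta : R) :
  C2 f -> C2 g -> closed K -> solset f g K !=set0 ->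
  0 < kappa -> 0 < delta ->
  so_weak_sharp f g K xbar kappa delta ->
  forall x, solset f g K x -> enorm (x - xbar) < delta ->
  forall d, critcone f g K x d ->
  forall lam : 'rV[R]_m, (forall v, 'd (Lag f g lam) x v = 0) ->
    (suppf [set 'd g x w | w in tsetpp (feas g K) x d] lam <= 0)%E /\
    ((D2 (Lag f g lam) x d d)%:E
       - suppf [set ('d g x w + D2 g x d d)%R | w in tset2 (feas g K) x d] lam
     >= (2 * kappa * eucl_dist d (tcone (solset f g K) x) ^+ 2)%:E)%E.
Proof.
move=> [df [d2f _]] [dg [d2g _]] Kcl Sne kap0 del0 [xbarF wsm] x xS xd d [dK dfd] lam dL.
have fmin : forall y, feas g K y -> f x <= f y := xS.2.
have dfg : forall v, 'd f x v = - dotv ('d g x v) lam.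
  move=> v; have := eq_trans (esym (dL v)) ((diff_Lag lam (df x) (dg x)).2 v); lra.
split.
  apply: ub_ereal_sup => _ [_ [w hw <-] <-]; rewrite lee_fin.
  have := part1 df (fun v => d2f v x) fmin dfd hw; have := dfg w; lra.
have Hs : forall y, feas g K y -> enorm (y - xbar) < delta ->
    f x + kappa * eucl_dist y (solset f g K) ^+ 2 <= f y.
  by move=> y Fy yd; have := wsm y Fy yd; have := fmin xbar xbarF; lra.
have D2L := D2_Lag lam df dg (d2f d x) (d2g d x).
set d0 := eucl_dist d (tcone (solset f g K) x).
have H : (suppf [set ('d g x w + D2 g x d d)%R | w in tset2 (feas g K) x d] lam <=
    (D2 (Lag f g lam) x d d - 2 * kappa * d0 ^+ 2)%:E)%E.
  apply: ub_ereal_sup => _ [_ [w hw <-] <-]; rewrite lee_fin dotvDl.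
  exact: (alg5 _ _ _ _ _ _ D2L (dfg w) (part2 df (fun v => d2f v x) kap0 xS Hs xd dfd hw)).
move: H; case: (suppf _ _) => [s| |] H //.
  rewrite -EFinB lee_fin; rewrite lee_fin in H; exact: (alg6 _ _ _ H).
by rewrite /= leey.
Qed.
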